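(* Let $(\mathcal H,X)$ be a stable arrangement of $n$ hyperplanes in $\mathbb R^d$, $\mathcal C=\mathrm{code}(\mathcal H,X)$, and let $F\in\Gamma(\mathcal C)$ be a face with $|F|<n$ such that the region $R_F$ is nonempty. Then $(\{H_i^+\cap R_F\}_{i\notin\underline F},R_F)$ is a stable arrangement. Moreover, the nerve of $\{H_i^+\cap R_F,\ H_i^-\cap R_F\}_{i\in[n]\setminus\underline F}$ (vertex $i$ for $H_i^+\cap R_F$, vertex $\bar i$ for $H_i^-\cap R_F$) is either collapsible or equal to $\Gamma(2^{[n]\setminus\underline F})$.
   Context: An oriented affine hyperplane is $H_i=\{x:w_i\cdot x-h_i=0\}$ with $w_i\neq0$, $H_i^+=\{w_i\cdot x-h_i>0\}$, $H_i^-=\{w_i\cdot x-h_i<0\}$. For hyperplanes $\{H_i\}_{i\in I}$ and open convex $Y$, the atom of $\sigma\subseteq I$ is $\bigl(\bigcap_{i\in\sigma}(H_i^+\cap Y)\bigr)\setminus\bigcup_{j\in I\setminus\sigma}H_j^+$ (for $\sigma=\emptyset$: $Y\setminus\bigcup_iH_i^+$), the code is the set of $\sigma$ with nonempty atom, and the arrangement is stable if $Y$ is open convex and for every $\sigma\subseteq I$ with $Y\cap\bigcap_{i\in\sigma}H_i\neq\emptyset$, $\dim\bigcap_{i\in\sigma}H_i=d-|\sigma|$. The polar complex $\Gamma(\mathcal C)$ is the simplicial complex on $[n]\sqcup\{\bar1,\dots,\bar n\}$ of all subsets of $\Sigma(\sigma)=\sigma\sqcup\{\bar i:i\notin\sigma\}$,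 $\sigma\in\mathcal C$. A face $F$ is written $F=F^+\sqcup\{\bar j:j\in F^-\}$ with $F^\pm\subseteq[n]$; its support is $\underline F=F^+\cup F^-$, and $R_F=X\cap\bigcap_{i\in F^+}H_i^+\cap\bigcap_{j\in F^-}H_j^-$. For $S\subseteq[n]$, $\Gamma(2^S)$ is the complex on $S\sqcup\{\bar i:i\in S\}$ whose faces are the subsets containing no pair $\{i,\bar i\}$. The nerve of $\{V_v\}_{v\in V}$ is $\{S\subseteq V:\bigcap_{v\in S}V_v\ne\emptyset\}$. A free pair in a complex $\Delta$ is $(\sigma,\tau)$ with $\tau$ a facet, $\sigma\subsetneq\tau$, $\sigma$ in no other facet; collapsing along $\sigma$ gives $\{\nu\in\Delta:\nu\not\supseteq\sigma\}$; $\Delta$ is collapsible if finitely many collapses yield the void complex $\{\}$. *)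

(* Defs.v *)
From HB Require Import structures.
From mathcomp Require Import all_boot all_order all_algebra.
From mathcomp Require Import all_classical all_reals all_analysis.
Set Implicit Arguments. Unset Strict Implicit. Unset Printing Implicit Defensive.
Import Order.TTheory GRing.Theory Num.Theory.
Import numFieldNormedType.Exports.
Local Open Scope classical_set_scope.
Local Open Scope ring_scope.

Section Arrangements.
Variables (R : realType) (d n : nat).
Implicit Types (w : 'I_n -> 'rV[R]_d) (h : 'I_n -> R) (Y A : set 'rV[R]_d).

Definition dotv (u v : 'rV[R]_d) : R := \sum_(j < d) u 0 j * v 0 j.

Definition hyp w h (i : 'I_n) : set 'rV[R]_d := [set x | dotv (w i) x - h i = 0].
Definition hpos w h (i : 'I_n) : set 'rV[R]_d := [set x | dotv (w i) x - h i > 0].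
Definition hneg w h (i : 'I_n) : set 'rV[R]_d := [set x | dotv (w i) x - h i < 0].

Definition convex_set_rV Y : Prop :=
  forall x y, Y x -> Y y -> forall t : R, 0 <= t -> t <= 1 ->
    Y ((1 - t) *: x + t *: y).

(* affine dimension of a nonempty set A: dimension of its affine hull,
   i.e. the least dimension of a linear subspace V with A contained in a + V *)
Definition affine_dim A (k : nat) : Prop :=
  (exists x, A x) /\
  (exists (a : 'rV[R]_d) (V : {vspace 'rV[R]_d}),
      \dim V = k /\ forall x, A x -> x - a \in V) /\
  (forall (a : 'rV[R]_d) (V : {vspace 'rV[R]_d}),
      (forall x, A x -> x - a \in V) -> (k <= \dim V)%N).

Definition hypint w h (sigma : {set 'I_n}) : set 'rV[R]_d :=
  [set x | forall i, i \in sigma -> hyp w h i x].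

(* stability of the arrangement ({H_i}_{i in I}, Y):
   Y open convex, and for every sigma ⊆ I whose hyperplanes meet in Y,
   dim (⋂_{i in sigma} H_i) = d - |sigma| (as integers). *)
Definition stable (I : {set 'I_n}) w h Y : Prop :=
  open Y /\ convex_set_rV Y /\
  forall sigma : {set 'I_n}, sigma \subset I ->
    (exists x, Y x /\ hypint w h sigma x) ->
    exists k : nat, affine_dim (hypint w h sigma) k /\ (k + #|sigma| = d)%N.

Definition atom w h Y (sigma : {set 'I_n}) : set 'rV[R]_d :=
  [set x | Y x /\ (forall i, i \in sigma -> hpos w h i x)
                /\ (forall j, j \notin sigma -> ~ hpos w h j x)].

Definition in_code w h Y (sigma : {set 'I_n}) : Prop :=
  exists x, atom w h Y sigma x.

(* vertices: inl i = i, inr i = \bar i *)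
Definition Sigma (sigma : {set 'I_n}) : {set 'I_n + 'I_n} :=
  [set inl i | i in sigma] :|: [set inr i | i in ~: sigma].

Definition in_polar w h Y (F : {set 'I_n + 'I_n}) : Prop :=
  exists sigma, in_code w h Y sigma /\ F \subset Sigma sigma.

Definition Fplus (F : {set 'I_n + 'I_n}) : {set 'I_n} := [set i | inl i \in F].
Definition Fminus (F : {set 'I_n + 'I_n}) : {set 'I_n} := [set i | inr i \in F].
Definition fsupport (F : {set 'I_n + 'I_n}) : {set 'I_n} := Fplus F :|: Fminus F.

Definition region w h X (F : {set 'I_n + 'I_n}) : set 'rV[R]_d :=
  [set x | X x /\ (forall i, i \in Fplus F -> hpos w h i x)
              /\ (forall j, j \in Fminus F -> hneg w h j x)].

Definition polar_verts (S : {set 'I_n}) : {set 'I_n + 'I_n} :=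
  [set inl i | i in S] :|: [set inr i | i in S].

Definition Gamma_full (S : {set 'I_n}) (T : {set 'I_n + 'I_n}) : Prop :=
  T \subset polar_verts S /\ forall i, ~ (inl i \in T /\ inr i \in T).

End Arrangements.

Section Complexes.
Variable V : finType.
Definition complex := {set V} -> Prop.

Definition nerve {P : Type} (Vs : {set V}) (U : V -> set P) : complex :=
  fun S => S \subset Vs /\ exists x, forall v, v \in S -> U v x.

Definition facet (D : complex) (tau : {set V}) : Prop :=
  D tau /\ forall nu, D nu -> tau \subset nu -> nu = tau.

Definition free_pair (D : complex) (sigma tau : {set V}) : Prop :=
  facet D tau /\ sigma \proper tau /\
  forall tau', facet D tau' -> sigma \subset tau' -> tau' = tau.

Definition collapse (D : complex) (sigma : {set V}) : complex :=
  fun nu => D nu /\ ~ (sigma \subset nu).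

Definition void (D : complex) : Prop := forall nu, ~ D nu.

Inductive collapsible : complex -> Prop :=
| collapsible_void D : void D -> collapsible D
| collapsible_step D sigma tau :
    free_pair D sigma tau -> collapsible (collapse D sigma) -> collapsible D.
End Complexes.

(* Main.v *)
Require Import Defs.
From HB Require Import structures.
From mathcomp Require Import all_boot all_order all_algebra.
From mathcomp Require Import all_classical all_reals all_analysis.
From mathcomp Require Import zify ring lra.
Import Order.TTheory GRing.Theory Num.Theory.
Import numFieldNormedType.Exports.
Local Open Scope classical_set_scope.
Local Notation subsetP := fintype.subsetP.
Local Notation subset_trans := fintype.subset_trans.
Local Notation in_setU := finset.in_setU.
Local Notation in_setD1 := finset.in_setD1.
Local Notation setD1K := finset.setD1K.
Local Notation setU1K := finset.setU1K.
Local Notation properEneq := finset.properEneq.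
Local Notation properP := fintype.properP.
Local Notation setUS := finset.setUS.
Local Notation subsetUr := finset.subsetUr.

Section Comb.
Variable V : finType.
Implicit Types (A B X K : complex V) (s t : {set V}).

Lemma complex_ext A B : (forall s, A s <-> B s) -> A = B.
Proof. by move=> H; apply: funext => s; apply: propext. Qed.

Lemma set1K {v : V} {s} : v \notin s -> (v |: s) :\ v = s.
Proof. by move=> vs; rewrite setU1K. Qed.

Lemma glue (v : V) B : collapsible B -> forall X,
  (forall s, B s -> X s) -> (forall s, X s -> v \notin s) -> collapsible X ->
  forall K, (forall s, K s <-> X s \/ (v \in s /\ B (s :\ v))) -> collapsible K.
Proof.
elim=> {B} [B vB | B sg tau fp cB IH] X BX Xv cX K HK.
  have -> : K = X; last by [].
  apply: complex_ext => s; rewrite HK; split; [by case=> // -[_ /vB]|by left].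
case: fp => [[Btau taumax] [sgtau sguniq]].
have vtau : v \notin tau by apply/Xv/BX.
have vsg : v \notin sg.
  by apply: contra vtau; move/(subsetP (proper_sub sgtau)).
have Kvt : forall nu, K nu -> v \in nu -> B (nu :\ v).
  by move=> nu /HK [/Xv/negP//|[]].
apply: (@collapsible_step _ K (v |: sg) (v |: tau)).
- split; [split|split].
  + by apply/HK; right; rewrite setU11 set1K.
  + move=> nu Knu svt.
    have vnu : v \in nu by apply: (subsetP svt); rewrite setU11.
    have Bn := Kvt _ Knu vnu.
    have : tau \subset nu :\ v.
      apply/subsetP => x xt; rewrite in_setD1 (subsetP svt) ?andbT.
        by apply: contraNneq vtau => <-.
      by rewrite in_setU1 xt orbT.
    by move/(taumax _ Bn) => <-; rewrite setD1K.
  + rewrite properEneq setUS ?(proper_sub sgtau) // andbT.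
    apply: contraTneq sgtau => E.
    by rewrite properEneq -(set1K vsg) E set1K // eqxx.
  + move=> t [Kt tmax] svt.
    have vt : v \in t by apply: (subsetP svt); rewrite setU11.
    have Bt := Kvt _ Kt vt.
    have ft : facet B (t :\ v).
      split=> // nu Bnu tnu.
      have vnu : v \notin nu by apply/Xv/BX.
      have : K (v |: nu) by apply/HK; right; rewrite setU11 set1K.
      move/tmax => E.
      have : t \subset v |: nu.
        apply/subsetP => x xt; rewrite in_setU1.
        case: (eqVneq x v) => //= xv; apply: (subsetP tnu).
        by rewrite in_setD1 xv.
      by move/E => <-; rewrite set1K.
    have : sg \subset t :\ v.
      apply/subsetP => x xs; rewrite in_setD1 (subsetP svt) ?andbT.
        by apply: contraNneq vsg => <-.
      by rewrite in_setU1 xs orbT.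
    by move/(sguniq _ ft) => <-; rewrite setD1K.
- apply: (IH X) => //.
  + by move=> s [/BX].
  + move=> s; split.
    * case=> /HK [Xs|[vs Bs]] ns; first by left.
      right; split=> //; split=> // ss; apply: ns.
      apply/subsetP => x; rewrite in_setU1 => /orP[/eqP->//|xs].
      by move: (subsetP ss x xs); rewrite in_setD1 => /andP[].
    * case=> [Xs|[vs [Bs ns]]].
        split; first by apply/HK; left.
        by move/subsetP => /(_ v); rewrite setU11 => /(_ isT); apply/negP/Xv.
      split; first by apply/HK; right.
      move=> ss; apply: ns; apply/subsetP => x xs; rewrite in_setD1.
      rewrite (subsetP ss) ?in_setU1 ?xs ?orbT // andbT.
      by apply: contraNneq vsg => <-.
Qed.

Lemma exists_facet {A s} : A s -> exists tau, facet A tau /\ s \subset tau.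
Proof.
move=> As; have [N] := ubnP (#|V| - #|s|); elim: N s As => // N IH s As HN.
case: (pselect (forall nu, A nu -> s \subset nu -> nu = s)) => [H|].
  by exists s; split.
move/existsNP => [nu /not_implyP [Anu /not_implyP [snu nE]]].
have [tau [ft nt]] : exists tau, facet A tau /\ nu \subset tau.
  apply: (IH nu Anu).
  have : s \proper nu by rewrite properEneq snu andbT; apply/eqP => E; apply: nE.
  move/proper_card => lt; have := max_card nu; have := max_card s.
  move: HN lt; clear; lia.
by exists tau; split => //; apply: subset_trans nt.
Qed.

Lemma cone (v : V) A : (forall s, A s -> v \notin s) ->
  forall K, (forall s, K s <-> A s \/ (v \in s /\ A (s :\ v))) -> collapsible K.
Proof.
have [N] := ubnP #|(finset (fun s => `[< A s >]))|; elim: N A => // N IH A HN Av K HK.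
case: (pselect (exists s, A s)) => [[s0 As0]|nA]; last first.
  apply: collapsible_void => s /HK [As|[_ As]]; apply: nA; by eexists; eauto.
have [tau [[Atau tmax] _]] := exists_facet (A:=A) As0.
have vtau := Av _ Atau.
have Kvt : forall nu, K nu -> v \in nu -> A (nu :\ v).
  by move=> nu /HK [/Av/negP//|[]].
have Kvtau : K (v |: tau) by apply/HK; right; rewrite setU11 set1K.
have vtmax : forall nu, K nu -> v |: tau \subset nu -> nu = v |: tau.
  move=> nu Knu svt.
  have vnu : v \in nu by apply: (subsetP svt); rewrite setU11.
  have : tau \subset nu :\ v.
    apply/subsetP => x xt; rewrite in_setD1 (subsetP svt) ?andbT.
      by apply: contraNneq vtau => <-.
    by rewrite in_setU1 xt orbT.
  by move/(tmax _ (Kvt _ Knu vnu)) => <-; rewrite setD1K.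
have tne : v |: tau != tau.
  by apply/eqP => E; move: vtau; rewrite -E setU11.
apply: (@collapsible_step _ K tau (v |: tau)).
- split; [split=> //|split].
  + by rewrite properEneq eq_sym tne subsetUr.
  + move=> t [Kt tm] tt.
    case/HK: (Kt) => [At|[vt At]].
      have E := tmax _ At tt; subst t.
      by move: (tm _ Kvtau (subsetUr _ _)) => E; rewrite E eqxx in tne.
    have : tau \subset t :\ v.
      apply/subsetP => x xt; rewrite in_setD1 (subsetP tt) ?andbT //.
      by apply: contraNneq vtau => <-.
    by move/(tmax _ At) => <-; rewrite setD1K.
- pose A' := fun s => A s /\ s <> tau.
  apply: (IH A').
  + have : (finset (fun s => `[< A' s >])) \proper (finset (fun s => `[< A s >])).
      apply/properP; split.
        by apply/subsetP => s; rewrite !inE => -[].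
      exists tau; rewrite inE; [exact/asboolP | by apply/negP => /asboolP -[]].

    move/proper_card => lt; move: HN lt; clear; lia.
  + by move=> s [/Av].
  + move=> s; split.
    * case=> /HK [As|[vs As]] ns.
        by left; split=> // E; apply: ns; rewrite E.
      right; split=> //; split=> // E; apply: ns.
      by apply/subsetP => x xt; move: (setD1K vs) => <-; rewrite E in_setU1 xt orbT.
    * case=> [[As nE]|[vs [As nE]]].
        split; first by apply/HK; left.
        by move=> ts; apply: nE; apply: tmax.
      split; first by apply/HK; right.
      move=> ts; apply: nE; apply: tmax => //.
      apply/subsetP => x xt; rewrite in_setD1 (subsetP ts) ?andbT //.
      by apply: contraNneq vtau => <-.
Qed.

Lemma combo (v1 v2 : V) K' A1 A2 K : v1 != v2 ->
  (forall s, K' s -> v1 \notin s /\ v2 \notin s) ->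
  (forall s, A1 s -> K' s) -> (forall s, A2 s -> K' s) ->
  (forall s, K s <-> K' s \/ (v1 \in s /\ A1 (s :\ v1)) \/ (v2 \in s /\ A2 (s :\ v2))) ->
  collapsible A2 -> (A1 = K' \/ (collapsible A1 /\ collapsible K')) ->
  collapsible K.
Proof.
move=> v12 K'v A1K A2K HK cA2 H1.
pose X1 := fun s => K' s \/ (v1 \in s /\ A1 (s :\ v1)).
apply: (@glue v2 A2 cA2 X1).
- by move=> s /A2K; left.
- move=> s [/K'v []//|[v1s /A1K /K'v [_]]].
  by apply: contra; rewrite in_setD1 eq_sym v12.
- case: H1 => [E|[cA1 cK']].
    apply: (@cone v1 A1); first by move=> s /A1K /K'v [].
    by move=> s; rewrite /X1 E.
  apply: (@glue v1 A1 cA1 K') => //; first by move=> s /K'v [].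
- by move=> s; rewrite HK /X1; tauto.
Qed.

End Comb.

Section Geo.
Variables (R : realType) (d n : nat) (w : 'I_n -> 'rV[R]_d) (h : 'I_n -> R).
Local Open Scope ring_scope.

Lemma dotvD a (x y : 'rV[R]_d) : dotv a (x + y) = dotv a x + dotv a y.
Proof. by rewrite /dotv -big_split /=; apply: eq_bigr => j _; rewrite mxE mulrDr. Qed.

Lemma dotvZ a t (x : 'rV[R]_d) : dotv a (t *: x) = t * dotv a x.
Proof. by rewrite /dotv mulr_sumr; apply: eq_bigr => j _; rewrite mxE mulrCA. Qed.

Lemma dotv_comb a b t (x y : 'rV[R]_d) :
  dotv a ((1 - t) *: x + t *: y) - b = (1 - t) * (dotv a x - b) + t * (dotv a y - b).
Proof. rewrite dotvD !dotvZ; ring. Qed.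

Lemma dotv_shift a b t (x v : 'rV[R]_d) :
  dotv a (x + t *: v) - b = (dotv a x - b) + t * dotv a v.
Proof. rewrite dotvD !dotvZ; ring. Qed.

Lemma convex_hpos i : convex_set_rV (hpos w h i).
Proof.
move=> x y hx hy t t0 t1; rewrite /hpos /= in hx hy *; rewrite dotv_comb.
case: (ltrP t 1) => tl.
  have h1 : 0 < (1 - t) * (dotv (w i) x - h i) by apply: mulr_gt0 => //; rewrite subr_gt0.
  have h2 : 0 <= t * (dotv (w i) y - h i) by apply: mulr_ge0 => //; apply: ltW.
  lra.
have -> : t = 1 by apply/eqP; rewrite eq_le t1 tl.
by rewrite subrr mul0r add0r mul1r.
Qed.

Lemma convex_hneg i : convex_set_rV (hneg w h i).
Proof.
move=> x y hx hy t t0 t1; rewrite /hneg /= in hx hy *; rewrite dotv_comb.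
case: (ltrP t 1) => tl.
  have h1 : 0 < (1 - t) * - (dotv (w i) x - h i) by apply: mulr_gt0; rewrite ?oppr_gt0 // subr_gt0.
  have h2 : 0 <= t * - (dotv (w i) y - h i) by apply: mulr_ge0 => //; rewrite oppr_ge0 ltW.
  rewrite !mulrN in h1 h2; lra.
have -> : t = 1 by apply/eqP; rewrite eq_le t1 tl.
by rewrite subrr mul0r add0r mul1r.
Qed.

Lemma convexI (A B : set 'rV[R]_d) : convex_set_rV A -> convex_set_rV B ->
  convex_set_rV (A `&` B).
Proof. by move=> cA cB x y [Ax Bx] [Ay By] t t0 t1; split; [apply: cA|apply: cB]. Qed.

Lemma dotv_cont (a : 'rV[R]_d) : continuous (dotv a).
Proof.
move=> x; rewrite /dotv.
have := @cvg_big R _ +%R 0 xpredT add_continuous _ (nbhs x) (index_enum 'I_d) (fun j y => a 0 j * y 0 j) (fun j => a 0 j * x 0 j) (nbhs_filter x).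
apply => j _. apply: cvgMr. have := @coord_continuous R 1 d 0 j x. exact.
Qed.

Lemma open_hpos i : open (hpos w h i).
Proof.
have -> : hpos w h i = dotv (w i) @^-1` [set y | y > h i].
  by apply/seteqP; split => x; rewrite /hpos /= subr_gt0.
by apply: open_comp; [move=> x _; apply: dotv_cont | apply: open_gt].
Qed.

Lemma open_hneg i : open (hneg w h i).
Proof.
have -> : hneg w h i = dotv (w i) @^-1` [set y | y < h i].
  by apply/seteqP; split => x; rewrite /hneg /= subr_lt0.
by apply: open_comp; [move=> x _; apply: dotv_cont | apply: open_lt].
Qed.

Lemma open_step (Y : set 'rV[R]_d) p v : open Y -> Y p ->
  exists2 t : R, 0 < t & Y (p + t *: v).
Proof.
rewrite openE => /(_ p) oY Yp.
have := oY Yp; rewrite /interior => /nbhs_ballP [e e0 He].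
pose t := e / 2 / (`|v| + 1).
have t0 : 0 < t by rewrite divr_gt0 ?divr_gt0 // ltr_pwDr.
exists t => //; apply: He.
rewrite -ball_normE /ball_ /= opprD addrA subrr add0r normrN normrZ gtr0_norm //.
have : t * (`|v| + 1) = e / 2 by rewrite /t mulfVK // gt_eqF // ltr_pwDr.
have := normr_ge0 v; set nv := `|v|; move: t0; set tt := t => t0 nv0 E.
have : tt * nv <= tt * (nv + 1) by rewrite ler_pM2l // lerDl.
by rewrite E => H; apply: (le_lt_trans H); rewrite ltr_pdivrMr // ltr_pMr // ltr1n.
Qed.

Implicit Types (S : {set 'I_n}) (T : {set 'I_n + 'I_n}) (Y : set 'rV[R]_d).

Definition Uc (Y : set 'rV[R]_d) (v : 'I_n + 'I_n) : set 'rV[R]_d :=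
  match v with inl i => hpos w h i `&` Y | inr i => hneg w h i `&` Y end.
Definition Kc (Y : set 'rV[R]_d) (S : {set 'I_n}) : complex ('I_n + 'I_n)%type :=
  fun T => T \subset polar_verts S /\ exists x, Y x /\ forall v, v \in T -> Uc Y v x.
Definition Pc (Y : set 'rV[R]_d) S := exists x, Y x /\ hypint w h S x.
Definition stab (Y : set 'rV[R]_d) (S : {set 'I_n}) :=
  forall sigma : {set 'I_n}, sigma \subset S ->
    (exists x, Y x /\ hypint w h sigma x) ->
    exists k : nat, affine_dim (hypint w h sigma) k /\ (k + #|sigma| = d)%N.

Lemma pv_inl (S : {set 'I_n}) i : (inl i \in polar_verts S) = (i \in S).
Proof.
rewrite /polar_verts in_setU mem_imset; last by move=> ? ? [].
by case: imsetP => [[j _ //]|]; rewrite orbF.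
Qed.

Lemma pv_inr (S : {set 'I_n}) i : (inr i \in polar_verts S) = (i \in S).
Proof.
rewrite /polar_verts in_setU (mem_imset (f:=inr)); last by move=> ? ? [].
by case: imsetP => [[j _ //]|].
Qed.

Lemma pv_sub (S1 S2 : {set 'I_n}) : S1 \subset S2 -> polar_verts S1 \subset polar_verts S2.
Proof.
move=> /subsetP s12; apply/subsetP => -[i|i]; rewrite ?pv_inl ?pv_inr; exact: s12.
Qed.

Lemma Uc_Y Y v x : Uc Y v x -> Y x.
Proof. by case: v => i []. Qed.

Lemma Uc_mono Y1 Y2 v x : Y1 `<=` Y2 -> Uc Y1 v x -> Uc Y2 v x.
Proof. by move=> sY; case: v => i [? /sY]. Qed.

Lemma Uc_I Y Y' v x : Uc Y v x -> Y' x -> Uc (Y `&` Y') v x.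
Proof. by case: v => i [? ?] ?. Qed.

Lemma Kc_mono (Y1 Y2 : set 'rV[R]_d) (S1 S2 : {set 'I_n}) T : Y1 `<=` Y2 -> S1 \subset S2 -> Kc Y1 S1 T -> Kc Y2 S2 T.
Proof.
move=> sY sS [sT [x [Yx Hx]]]; split; first by apply: (subset_trans sT); apply: pv_sub.
by exists x; split; [apply: sY | move=> v /Hx; apply: Uc_mono].
Qed.

Lemma Kc_gamma Y S T : Kc Y S T -> Gamma_full S T.
Proof.
move=> [sT [x [Yx Hx]]]; split => // i [/Hx [p _] /Hx [q _]].
by move: p q; rewrite /hpos /hneg /= => p q; move: (lt_trans q p); rewrite ltxx.
Qed.

Lemma Kc_decomp Y S m : m \in S -> forall T,
  Kc Y S T <-> Kc Y (S :\ m) T \/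
    (inl m \in T /\ Kc (Y `&` hpos w h m) (S :\ m) (T :\ inl m)) \/
    (inr m \in T /\ Kc (Y `&` hneg w h m) (S :\ m) (T :\ inr m)).
Proof.
move=> mS T; split.
  move=> [sT [x [Yx Hx]]].
  have inS : forall v, v \in T -> v \in polar_verts S by apply/subsetP.
  case: (boolP (inl m \in T)) => lm.
    have pm : hpos w h m x by case: (Hx _ lm).
    right; left; split => //; split.
      apply/subsetP => -[i|i]; rewrite in_setD1 => /andP [ni iT].
        by rewrite pv_inl in_setD1 -(pv_inl S) inS // andbT; apply: contra ni => /eqP ->.
      rewrite pv_inr in_setD1 -(pv_inr S) inS // andbT.
      apply/eqP => E; subst i; case: (Hx _ iT) => nm _.
      by move: pm nm; rewrite /hpos /hneg /= => p q; move: (lt_trans q p); rewrite ltxx.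
    by exists x; split => // v; rewrite in_setD1 => /andP [_ /Hx] H; apply: Uc_I.
  case: (boolP (inr m \in T)) => rm.
    have nm : hneg w h m x by case: (Hx _ rm).
    right; right; split => //; split.
      apply/subsetP => -[i|i]; rewrite in_setD1 => /andP [ni iT].
        rewrite pv_inl in_setD1 -(pv_inl S) inS // andbT.
        apply/eqP => E; subst i; case: (Hx _ iT) => pm _.
        by move: pm nm; rewrite /hpos /hneg /= => p q; move: (lt_trans q p); rewrite ltxx.
      by rewrite pv_inr in_setD1 -(pv_inr S) inS // andbT; apply: contra ni => /eqP ->.
    by exists x; split => // v; rewrite in_setD1 => /andP [_ /Hx] H; apply: Uc_I.
  left; split; last by exists x.
  apply/subsetP => -[i|i] iT.
    rewrite pv_inl in_setD1 -(pv_inl S) inS // andbT.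
    by apply: contraNneq lm => <-.
  rewrite pv_inr in_setD1 -(pv_inr S) inS // andbT.
  by apply: contraNneq rm => <-.
case=> [|[[lm [sT [x [[Yx px] Hx]]]]|[rm [sT [x [[Yx px] Hx]]]]]].
- by apply: Kc_mono => //; apply: subD1set.
- split.
    apply/subsetP => v vT; case: (eqVneq v (inl m)) => [->|nv]; first by rewrite pv_inl.
    have : v \in T :\ inl m by rewrite in_setD1 nv.
    by move/(subsetP sT); apply/subsetP/pv_sub/subD1set.
  exists x; split => // v vT; case: (eqVneq v (inl m)) => [->|nv]; first by split.
  by apply: Uc_mono (Hx v _); [move=> ? []|rewrite in_setD1 nv].
- split.
    apply/subsetP => v vT; case: (eqVneq v (inr m)) => [->|nv]; first by rewrite pv_inr.
    have : v \in T :\ inr m by rewrite in_setD1 nv.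
    by move/(subsetP sT); apply/subsetP/pv_sub/subD1set.
  exists x; split => // v vT; case: (eqVneq v (inr m)) => [->|nv]; first by split.
  by apply: Uc_mono (Hx v _); [move=> ? []|rewrite in_setD1 nv].
Qed.

Lemma solve_signs S p k (s : 'I_n -> R) :
  hypint w h S p -> affine_dim (hypint w h S) k -> (k + #|S| = d)%N ->
  exists v : 'rV[R]_d, forall i, i \in S -> dotv (w i) v = s i.
Proof.
move=> Hp [_ [[a [V [dV HV]]] _]] kd.
pose c := #|S|.
pose M : 'M[R]_(d, c) := \matrix_(a0, j) w (enum_val j) 0 a0.
pose f : 'Hom('rV[R]_d, 'rV[R]_c) := linfun (mulmxr M).
have fE : forall u, f u = u *m M by move=> u; rewrite lfunE.
have dotE : forall u j, (u *m M) 0 j = dotv (w (enum_val j)) u.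
  by move=> u j; rewrite mxE /dotv; apply: eq_bigr => a0 _; rewrite mxE mulrC.
have kerV : (lker f <= V)%VS.
  apply/subvP => u; rewrite memv_ker fE => /eqP u0.
  have Hpu : hypint w h S (p + u).
    move=> i iS; rewrite /hyp /= dotvD.
    have := congr1 (fun M : 'rV[R]_c => M 0 (enum_rank_in iS i)) u0.
    rewrite dotE enum_rankK_in // mxE => ->; rewrite addr0; exact: Hp.
  have := memvB (HV _ Hpu) (HV _ Hp).
  have -> : p + u - a - (p - a) = u by rewrite opprB addrA subrK addrC addKr.
  by [].
have dimker : (\dim (lker f) <= k)%N by rewrite -dV; apply: dimvS.
have := limg_ker_dim f fullv; rewrite capfv dimvf dim_matrix ?mul1n => Hd.
have full : limg f = fullv.
  apply/eqP; rewrite eqEdim subvf dimvf dim_matrix ?mul1n /=.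
  move: Hd dimker kd; rewrite /c; lia.
pose t : 'rV[R]_c := \row_j s (enum_val j).
have : t \in limg f by rewrite full memvf.
case/memv_imgP => u _ tE.
exists u => i iS.
have := congr1 (fun M : 'rV[R]_c => M 0 (enum_rank_in iS i)) tE.
by rewrite /= fE dotE !mxE enum_rankK_in.
Qed.

Lemma Kc_full Y S : open Y ->
  (exists k, affine_dim (hypint w h S) k /\ (k + #|S| = d)%N) -> Pc Y S ->
  forall T, Kc Y S T <-> Gamma_full S T.
Proof.
move=> oY [k [ak kd]] [p [Yp Hp]] T; split; first exact: Kc_gamma.
case=> sub nopair.
pose s i : R := if inl i \in T then 1 else -1.
have [v Hv] := @solve_signs S p k s Hp ak kd.
have [t t0 Yt] := @open_step Y p v oY Yp.
split => //; exists (p + t *: v); split => // -[i|i] iT.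
  have iS : i \in S by rewrite -(pv_inl S) (subsetP sub).
  split => //; rewrite /hpos /= dotv_shift (Hp i iS) add0r Hv // /s iT mulr1 //.
have iS : i \in S by rewrite -(pv_inr S) (subsetP sub).
have li : inl i \notin T by apply/negP => li; apply: (nopair i).
split => //; rewrite /hneg /= dotv_shift (Hp i iS) add0r Hv // /s (negbTE li).
by rewrite mulrN1 oppr_lt0.
Qed.

Lemma comb_point Y S m x y : convex_set_rV Y -> m \in S -> Y x -> Y y ->
  hypint w h (S :\ m) x -> hypint w h (S :\ m) y ->
  0 < dotv (w m) x - h m -> dotv (w m) y - h m < 0 -> Pc Y S.
Proof.
move=> cY mS Yx Yy Hx Hy gx gy.
set a := dotv (w m) x - h m in gx; set b := dotv (w m) y - h m in gy.
have D0 : 0 < a - b by lra.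
pose t := a / (a - b).
have tE : t * (a - b) = a by rewrite /t divfK // gt_eqF.
have t0 : 0 <= t by rewrite /t divr_ge0 // ltW.
have t1 : t <= 1 by rewrite /t ler_pdivrMr // mul1r; lra.
exists ((1 - t) *: x + t *: y); split; first exact: cY.
move=> i iS; rewrite /hyp /= dotv_comb.
case: (eqVneq i m) => [->|im].
  rewrite -/a -/b; move: tE; rewrite mulrBr mulrBl mul1r => tE; lra.
have iS' : i \in S :\ m by rewrite in_setD1 im.
by rewrite (Hx i iS') (Hy i iS') !mulr0 addr0.
Qed.

Lemma stab_mono Y1 Y2 S1 S2 : Y1 `<=` Y2 -> S1 \subset S2 -> stab Y2 S2 -> stab Y1 S1.
Proof.
move=> sY sS st sg sgS [x [Yx Hx]]; apply: st; first exact: subset_trans sgS sS.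
by exists x; split => //; apply: sY.
Qed.

Lemma main N : forall S Y, (#|S| < N)%N -> open Y -> convex_set_rV Y ->
  stab Y S -> ~ Pc Y S -> collapsible (Kc Y S).
Proof.
elim: N => // N IH S Y HS oY cY sY nP.
case: (set_0Vmem S) => [S0 | [m mS]].
  apply: collapsible_void => T [_ [x [Yx _]]]; apply: nP; exists x; split => //.
  by move=> i; rewrite S0 inE.
set S' := S :\ m.
have HS' : (#|S'| < N)%N by move: HS; rewrite (cardsD1 m S) mS.
set Yp := Y `&` hpos w h m; set Yn := Y `&` hneg w h m.
have oYp : open Yp by apply: openI => //; apply: open_hpos.
have oYn : open Yn by apply: openI => //; apply: open_hneg.
have cYp : convex_set_rV Yp by apply: convexI => //; apply: convex_hpos.
have cYn : convex_set_rV Yn by apply: convexI => //; apply: convex_hneg.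
have sS' : S' \subset S by apply: subD1set.
have sYp : stab Yp S' by apply: stab_mono sY => // ? [].
have sYn : stab Yn S' by apply: stab_mono sY => // ? [].
have sY' : stab Y S' by apply: stab_mono sY.
have Pcomb : Pc Yp S' -> Pc Yn S' -> False.
  move=> [x [[Yx px] Hx]] [y [[Yy ny] Hy]]; apply: nP.
  by apply: (@comb_point Y S m x y cY mS Yx Yy Hx Hy).
have dec := @Kc_decomp Y S m mS.
have AK : forall T, Kc Yp S' T -> Kc Y S' T by move=> T; apply: Kc_mono => // ? [].
have BK : forall T, Kc Yn S' T -> Kc Y S' T by move=> T; apply: Kc_mono => // ? [].
have K'v : forall T, Kc Y S' T -> inl m \notin T /\ inr m \notin T.
  move=> T [sT _]; split; apply/negP => /(subsetP sT);
    by rewrite ?pv_inl ?pv_inr setD11.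
have fullE : forall Y0, open Y0 -> Y0 `<=` Y -> stab Y0 S' -> Pc Y0 S' -> Kc Y0 S' = Kc Y S'.
  move=> Y0 oY0 sY0 st0 P0; apply: complex_ext => T; split; first by apply: Kc_mono.
  move/Kc_gamma => G; apply/(@Kc_full Y0 S' oY0) => //.
  by apply: st0 => //; case: P0 => x [? ?]; exists x.
case: (pselect (Pc Yp S')) => [Pp|nPp].
  have nPn : ~ Pc Yn S' by move=> Pn; apply: Pcomb.
  apply: (@combo _ (inl m) (inr m) (Kc Y S') (Kc Yp S') (Kc Yn S') (Kc Y S)) => //.
  - exact: IH.
  - by left; apply: fullE => // ? [].
case: (pselect (Pc Yn S')) => [Pn|nPn].
  apply: (@combo _ (inr m) (inl m) (Kc Y S') (Kc Yn S') (Kc Yp S') (Kc Y S)) => //.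
  - by move=> T /K'v [].
  - by move=> T; rewrite dec; tauto.
  - exact: IH.
  - by left; apply: fullE => // ? [].
have nP' : ~ Pc Y S'.
  move=> [x [Yx Hx]].
  case: (ltgtP (dotv (w m) x - h m) 0) => gm.
  - by apply: nPn; exists x.
  - by apply: nPp; exists x.
  - apply: nP; exists x; split => // i iS; case: (eqVneq i m) => [->//|im].
    by apply: Hx; rewrite in_setD1 im.
apply: (@combo _ (inl m) (inr m) (Kc Y S') (Kc Yp S') (Kc Yn S') (Kc Y S)) => //.
- exact: IH.
- by right; split; apply: IH.
Qed.

End Geo.

Local Open Scope ring_scope.

Theorem proposition3p7 (R : realType) (d n : nat)
  (w : 'I_n -> 'rV[R]_d) (h : 'I_n -> R) (X : set 'rV[R]_d)
  (F : {set 'I_n + 'I_n}) :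
  (forall i, w i != 0) ->
  stable [set: 'I_n] w h X ->
  in_polar w h X F ->
  (#|F| < n)%N ->
  (exists x, region w h X F x) ->
  stable (~: fsupport F) w h (region w h X F) /\
  (let S := ~: fsupport F in
   let U := fun v : 'I_n + 'I_n =>
     match v with
     | inl i => hpos w h i `&` region w h X F
     | inr i => hneg w h i `&` region w h X F
     end in
   collapsible (nerve (polar_verts S) U) \/
   (forall T, nerve (polar_verts S) U T <-> Gamma_full S T)).
Proof.
move=> _ [oX [cX stX]] _ _ [x0 Rx0].
have oY : open (region w h X F).
  rewrite openE => x [Xx [Hp Hn]].
  have nX : nbhs x X by move: oX; rewrite openE => /(_ x Xx).
  have np : \forall y \near x, forall i : 'I_n, i \in Fplus F -> hpos w h i y.
    apply: (@filter_forall _ 'I_n (fun i y => i \in Fplus F -> hpos w h i y) (nbhs x) _) => i.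
    case: (boolP (i \in Fplus F)) => iF.
      have := @open_hpos _ _ _ w h i; rewrite openE => /(_ x (Hp i iF)) H.
      by apply: filterS H => y hy _.
    by apply: filterE => y; move/negP: iF.
  have nn : \forall y \near x, forall i : 'I_n, i \in Fminus F -> hneg w h i y.
    apply: (@filter_forall _ 'I_n (fun i y => i \in Fminus F -> hneg w h i y) (nbhs x) _) => i.
    case: (boolP (i \in Fminus F)) => iF.
      have := @open_hneg _ _ _ w h i; rewrite openE => /(_ x (Hn i iF)) H.
      by apply: filterS H => y hy _.
    by apply: filterE => y; move/negP: iF.
  suff : nbhs x (region w h X F) by [].
  apply: (filterS _ (filterI nX (filterI np nn))) => y [Xy [Py Ny]].
  by split.
have cY : convex_set_rV (region w h X F).
  move=> x y [Xx [Px Nx]] [Xy [Py Ny]] t t0 t1; split; first exact: cX.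
  split=> i iF.
    by apply: (@convex_hpos _ _ _ w h i) => //; [exact: Px | exact: Py].
  by apply: (@convex_hneg _ _ _ w h i) => //; [exact: Nx | exact: Ny].
have sY : @stab _ _ _ w h (region w h X F) (~: fsupport F).
  move=> sg _ [x [[Xx _] Hx]]; apply: stX; first exact: finset.subsetT.
  by exists x.
split; first by split; [|split].
move=> S U.
have KE : nerve (polar_verts S) U = @Kc _ _ _ w h (region w h X F) S.
  apply: complex_ext => T; split; case=> sT [x Hx]; split => //.
    case: (set_0Vmem T) => [T0|[v vT]].
      by exists x0; split => // v; rewrite T0 inE.
    by exists x; split => //; apply: (@Uc_Y _ _ _ w h _ v); apply: Hx.
  by exists x; case: Hx.
rewrite KE.
case: (pselect (@Pc _ _ _ w h (region w h X F) S)) => [P|nP].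
  right; apply: Kc_full => //.
  by apply: sY => //; case: P => x [? ?]; exists x.
by left; apply: (@main _ _ _ w h #|S|.+1).
Qed.
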